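(* Let $\Gamma,T,\ast$ and $W$ be as in the context, and let $c$ be a cell of $\mathcal{UD}^n\Gamma$. Then: (1) $c$ is critical if and only if $c$ contains no order-respecting edge and all vertices of $c$ are blocked; (2) $c$ is redundant if and only if either (a) $c$ contains no order-respecting edge and at least one vertex of $c$ is unblocked, or (b) $c$ contains an order-respecting edge, and, with $e$ the minimal order-respecting edge of $c$, there is an unblocked vertex $v\in c$ with $v<\iota(e)$; (3) $c$ is collapsible if and only if $c$ contains an order-respecting edge and, with $e$ the minimal order-respecting edge of $c$, every vertex $v\in c$ with $v<\iota(e)$ is blocked.
   Context: $\Gamma$ is a finite connected graph and $n\ge1$; $d(v)$ is the degree of $v$, and $v$ is essential if $d(v)\ge3$. $\mathcal{UD}^n\Gamma$ is the cell complex whose cells are unordered $n$-element sets $c=\{c_1,\dots,c_n\}$ where each $c_i$ is a vertex or an edge of $\Gamma$ and the closed sets $c_i$ are pairwise disjoint (it is the quotient by the coordinate-permuting $S_n$-action of the subcomplex of $\Gamma^n$ formed by the product cells whose closures avoid the diagonal); the dimension of $c$ is the number of edges in it, and faces are obtained by replacing edges by endpoints. Fix a maximal tree $T$ of $\Gamma$ (edges not in $T$ are deleted edges) and a vertex $\ast$ of degree $1$ in $T$. For vertices $v_1,v_2$, $v_1\wedge v_2$ is the endpoint other than $\ast$ of $[\ast,v_1]\cap[\ast,v_2]$ (geodesics in $T$), or $\ast$ if this is $\{\ast\}$. Directions (edges) at each vertex $v$ are labelled $0,\dots,d(v)-1$, label $0$ for the edge of $T$ towards $\ast$ (the direction from $\ast$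 in $T$ gets label $1$); $g(v_1,v_2)$ is the label of the direction from $v_1$ on the $T$-geodesic to $v_2$, and $g(v,v)=0$. Order: $v_1\le v_2$ iff, with $v_3=v_1\wedge v_2$, $v_3=v_1$ or ($v_3\ne v_1$ and $g(v_3,v_1)<g(v_3,v_2)$); this is a linear order. For an edge $e$, $\iota(e)\ge\tau(e)$ are its endpoints; for $v\ne\ast$, $e(v)$ is the edge of $T$ at $v$ in direction $0$. Blocking and $W$: a vertex $v\neq\ast$ of a cell $c$ is unblocked in $c$ if $e(v)$ is disjoint from every element of $c$ other than $v$; then the elementary reduction of $c$ from $v$ is the cell obtained by replacing $v$ by $e(v)$. Otherwise (and always for $v=\ast$) $v$ is blocked. The principal reduction of $c$ is the elementary reduction from the smallest unblocked vertex of $c$ (if there is one). Define $W$: for a $0$-cell $c$, $W_0(c)$ is its principal reduction if it exists; for $i>0$ and an $i$-cell $c$, $W_i(c)$ is its principal reduction if this exists and $c\notin\mathrm{im}W_{i-1}$; otherwise undefined. A cell is redundant if it is in the domain of $W$, collapsible if it is in the image of $W$, and critical otherwise. An edge $e$ of a cell $c$ is order-respecting in $c$ if $e\subseteq T$ and for every vertex $v\in c$ with $v\neq\ast$, $e(v)\cap e=\{\tau(e)\}$ implies $v>\iota(e)$. If $c$ has order-respecting edges, the minimal one is the one with smallest $\iota(e)$. *)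

(* Defs.v *)
(* Graphs are finite multigraphs (loops allowed):
   vertex finType gV, edge finType gE, endpoint maps src/tgt. *)
From Stdlib Require Import ClassicalEpsilon.
From mathcomp Require Import all_boot.

(* Data: graph Gamma, set T of tree edges, base vertex star, and a
   labelling of directions: lab v e b is the label, at v, of the direction
   given by the end b of e (b = true: the src end, b = false: the tgt end). *)
Record gsetup := GSetup {
  gV : finType;
  gE : finType;
  src : gE -> gV;
  tgt : gE -> gV;
  gT : {set gE};
  star : gV;
  lab : gV -> gE -> bool -> nat }.

Section Defs.
Variable S : gsetup.
Local Notation V := (gV S).
Local Notation E := (gE S).

Definition endp (e : E) (b : bool) : V := if b then src S e else tgt S e.

Definition joins (e : E) (a x : V) : bool :=
  ((src S e == a) && (tgt S e == x)) || ((src S e == x) && (tgt S e == a)).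

(* a walk from a to b using edges satisfying P; each step (e, x) traverses
   e and arrives at x *)
Fixpoint walkin (P : pred E) (a b : V) (s : seq (E * V)) : bool :=
  match s with
  | [::] => a == b
  | (e, x) :: s' => P e && joins e a x && walkin P x b s'
  end.

Definition inT : pred E := fun e => e \in gT S.

Definition geod (a b : V) (s : seq (E * V)) : bool :=
  walkin inT a b s && uniq (a :: map snd s).

Definition gconnected : Prop := forall a b : V, exists s, walkin predT a b s.

Definition spanning_tree : Prop :=
  (forall a b : V, exists s, walkin inT a b s) /\
  ~ (exists (a : V) (s : seq (E * V)),
        [/\ s != [::], walkin inT a a s, uniq (map fst s) & uniq (map snd s)]).

Definition degT (v : V) : nat :=
  #|[set e in gT S | (src S e == v) || (tgt S e == v)]|.

(* degree = number of directions (half-edges) at v *)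
Definition deg (v : V) : nat :=
  #|[set e | src S e == v]| + #|[set e | tgt S e == v]|.

(* e is e(v): the first edge of the T-geodesic from v to star *)
Definition par_edge (v : V) (e : E) : Prop :=
  exists (x : V) (s : seq (E * V)), geod v (star S) ((e, x) :: s).

Definition labelling_ok : Prop :=
  [/\ (forall v e b, endp e b = v -> lab S v e b < deg v),
      (forall v e1 b1 e2 b2, endp e1 b1 = v -> endp e2 b2 = v ->
          lab S v e1 b1 = lab S v e2 b2 -> e1 = e2 /\ b1 = b2)
    & (forall v e, v <> star S -> par_edge v e -> lab S v e (src S e == v) = 0)].

Definition valid : Prop :=
  [/\ gconnected, spanning_tree, degT (star S) = 1 & labelling_ok].

Definition on_geod (a b x : V) : Prop :=
  exists s, geod a b s /\ x \in a :: map snd s.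

Definition is_meet (v1 v2 m : V) : Prop :=
  [/\ on_geod (star S) v1 m, on_geod (star S) v2 m &
      forall x, on_geod (star S) v1 x -> on_geod (star S) v2 x ->
        on_geod (star S) m x].

Definition gval (a b : V) (k : nat) : Prop :=
  (a = b /\ k = 0) \/
  exists (e : E) (x : V) (s : seq (E * V)),
    geod a b ((e, x) :: s) /\ k = lab S a e (src S e == a).

Definition vle (v1 v2 : V) : Prop :=
  exists m, is_meet v1 v2 m /\
    (m = v1 \/ (m <> v1 /\ exists k1 k2, [/\ gval m v1 k1, gval m v2 k2 & k1 < k2])).

Definition vlt (v1 v2 : V) : Prop := vle v1 v2 /\ v1 <> v2.

Definition iotaE (e : E) : V :=
  if excluded_middle_informative (vle (tgt S e) (src S e)) then src S e else tgt S e.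
Definition tauE (e : E) : V :=
  if excluded_middle_informative (vle (tgt S e) (src S e)) then tgt S e else src S e.

Definition endset (x : V + E) : {set V} :=
  match x with inl v => [set v] | inr e => [set src S e; tgt S e] end.

Definition cl_disj (x y : V + E) : bool := [disjoint endset x & endset y].

Definition is_cell (n : nat) (c : {set V + E}) : Prop :=
  #|c| = n /\ forall x y, x \in c -> y \in c -> x != y -> cl_disj x y.

Definition is_inr (x : V + E) : bool := if x is inr _ then true else false.

Definition dim (c : {set V + E}) : nat := #|[set x in c | is_inr x]|.

Definition unblocked (c : {set V + E}) (v : V) : Prop :=
  [/\ inl v \in c, v <> star S &
      exists e, par_edge v e /\
        forall x, x \in c -> x <> inl v -> cl_disj (inr e) x].

Definition blocked (c : {set V + E}) (v : V) : Prop :=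
  inl v \in c /\ ~ unblocked c v.

Definition elem_red (c : {set V + E}) (v : V) (c' : {set V + E}) : Prop :=
  unblocked c v /\ exists e, par_edge v e /\ c' = (c :\ inl v) :|: [set inr e].

Definition princ_red (c c' : {set V + E}) : Prop :=
  exists v, [/\ unblocked c v, (forall w, unblocked c w -> vle v w) & elem_red c v c'].

Fixpoint domW (n i : nat) (c : {set V + E}) : Prop :=
  [/\ dim c = i, (exists c', princ_red c c') &
      match i with
      | 0 => True
      | i'.+1 => ~ exists c0, [/\ is_cell n c0, domW n i' c0 & princ_red c0 c]
      end].

Definition redundant (n : nat) (c : {set V + E}) : Prop := domW n (dim c) c.

Definition collapsible (n : nat) (c : {set V + E}) : Prop :=
  exists c0, [/\ is_cell n c0, redundant n c0 & princ_red c0 c].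

Definition critical (n : nat) (c : {set V + E}) : Prop :=
  ~ redundant n c /\ ~ collapsible n c.

Definition ord_resp (c : {set V + E}) (e : E) : Prop :=
  [/\ inr e \in c, e \in gT S &
      forall v, inl v \in c -> v <> star S ->
        forall f, par_edge v f ->
          (f <> e /\ endset (inr f) :&: endset (inr e) = [set tauE e]) ->
          vlt (iotaE e) v].

Definition min_ord_resp (c : {set V + E}) (e : E) : Prop :=
  ord_resp c e /\ forall f, ord_resp c f -> vle (iotaE e) (iotaE f).

End Defs.

(* Main.v *)
Require Import Defs.
From Stdlib Require Import ClassicalEpsilon.
From mathcomp Require Import all_boot.
Set Implicit Arguments. Unset Strict Implicit. Unset Printing Implicit Defensive.

Lemma uniq_cyc (T: eqType) (a y : T) l1 l2 : uniq (a :: l1 ++ [:: y]) ->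
  uniq (a :: l2 ++ [:: y]) -> (forall z, z \in l1 -> z \notin l2) ->
  uniq (l1 ++ y :: rev (a :: l2)).
Proof.
rewrite !cats1 /= !rcons_uniq !mem_rcons !inE !negb_or.
move=> /and3P[/andP[ay a1] y1 U1] /and3P[/andP[_ a2] y2 U2] D.
rewrite cat_uniq U1 /= rev_uniq /= a2 U2 mem_rev inE !negb_or y1 eq_sym ay y2 !andbT /=.
apply/hasP=> [[z]]; rewrite mem_rev inE => /orP[/eqP za|zl2] zl1.
- by subst z; rewrite zl1 in a1.
- by move: (D z zl1); rewrite zl2.
Qed.

Section Walks.
Variable S : gsetup.
Local Notation V := (gV S).
Local Notation E := (gE S).

Lemma joinsC (e : E) a x : joins S e a x = joins S e x a.
Proof. by rewrite /joins orbC. Qed.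

Lemma joins_eq (e : E) a1 b1 a2 b2 : joins S e a1 b1 -> joins S e a2 b2 ->
  (a1 = a2 /\ b1 = b2) \/ (a1 = b2 /\ b1 = a2).
Proof.
rewrite /joins => /orP[/andP[/eqP<- /eqP<-]|/andP[/eqP<- /eqP<-]]
  /orP[/andP[/eqP-> /eqP->]|/andP[/eqP-> /eqP->]]; tauto.
Qed.

Lemma walkin_last P (a b : V) s : walkin S P a b s -> last a (map snd s) = b.
Proof.
elim: s a => [|[e x] s IH] a /=; first by move/eqP.
by case/andP=> _ /IH.
Qed.

Lemma walkin_cat P (a b : V) s t :
  walkin S P a b (s ++ t) =
  walkin S P a (last a (map snd s)) s && walkin S P (last a (map snd s)) b t.
Proof.
elim: s a => [|[e x] s IH] a /=; first by rewrite eqxx.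
by rewrite IH !andbA.
Qed.

Fixpoint revw (a : V) (s : seq (E * V)) : seq (E * V) :=
  match s with
  | [::] => [::]
  | (e, x) :: t => revw x t ++ [:: (e, a)]
  end.

Lemma walkin_rev P (a b : V) s : walkin S P a b s -> walkin S P b a (revw a s).
Proof.
elim: s a => [|[e x] s IH] a /=; first by move/eqP->.
case/andP=> /andP[Pe jx] W.
rewrite walkin_cat (walkin_last (IH _ W)) IH //= Pe joinsC jx eqxx.
by [].
Qed.

Lemma snd_revw (a : V) s :
  last a (map snd s) :: map snd (revw a s) = rev (a :: map snd s).
Proof.
elim: s a => [|[e x] s IH] a //=.
rewrite map_cat /= -cat_cons IH.
by rewrite [in RHS]rev_cons cats1.
Qed.

Lemma fst_revw (a : V) s : map fst (revw a s) = rev (map fst s).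
Proof.
elim: s a => [|[e x] s IH] a //=.
by rewrite map_cat IH rev_cons cats1.
Qed.

Lemma size_revw (a : V) s : size (revw a s) = size s.
Proof. by rewrite -(size_map fst) fst_revw size_rev size_map. Qed.

Lemma geod_rev (a b : V) s : geod S a b s -> geod S b a (revw a s).
Proof.
case/andP=> W U; rewrite /geod walkin_rev //=.
have := snd_revw a s; rewrite (walkin_last W) => H; by rewrite -[_ && _]/(uniq (b :: _)) H rev_uniq.
Qed.

Lemma split_first (T : Type) (p : pred T) (l : seq T) : has p l ->
  exists l1 y l2, [/\ l = l1 ++ y :: l2, ~~ has p l1 & p y].
Proof.
elim: l => [|z l IH] //= /orP[pz|/IH[l1 [y [l2 [-> h1 py]]]]].
  by exists [::], z, l.
case pz: (p z).
  by exists [::], z, (l1 ++ y :: l2).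
by exists (z :: l1), y, l2; rewrite /= pz.
Qed.

Definition ep (e : E) (v : V) := (src S e == v) || (tgt S e == v).

Lemma joins_ep (e : E) a x : joins S e a x -> ep e a && ep e x.
Proof. by rewrite /joins /ep => /orP[]/andP[/eqP-> /eqP->]; rewrite !eqxx ?orbT. Qed.

Lemma walk_edge_ep P (a b : V) s g : walkin S P a b s -> g \in map fst s ->
  forall v, ep g v -> v \in a :: map snd s.
Proof.
elim: s a => [|[e x] s IH] a //= /andP[/andP[_ j] W].
rewrite inE => /orP[/eqP->|gs] v.
  rewrite /ep => /orP[]/eqP<-; move: j; rewrite /joins
    => /orP[]/andP[/eqP sa /eqP tx]; by rewrite ?sa ?tx !inE eqxx ?orbT.
by move=> /(IH _ W gs) H; rewrite inE H orbT.
Qed.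

Lemma edge_uniq P (a b : V) s : walkin S P a b s -> uniq (a :: map snd s) ->
  uniq (map fst s).
Proof.
elim: s a => [|[e x] s IH] a //= /andP[/andP[_ j] W] /andP[na U].
rewrite (IH _ W U) andbT; apply/negP=> es.
have := joins_ep j; case/andP=> ea _.
by move: (walk_edge_ep W es ea) na; rewrite inE => ->.
Qed.

Lemma cyc_uniq P (a : V) C : walkin S P a a C -> uniq (map snd C) -> 2 < size C ->
  uniq (map fst C).
Proof.
case/lastP: C => [|C' [g w]] //.
rewrite -cats1 walkin_cat /= => /andP[W1 /andP[/andP[_ j] /eqP ew]].
subst w.
rewrite map_cat cat_uniq /= andbT => /andP[U' /norP[na _]].
rewrite size_cat /= addn1 ltnS => sz.
rewrite map_cat cat_uniq /= andbT orbF.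
have U0 : uniq (a :: map snd C') by rewrite /= na.
rewrite (edge_uniq W1 U0) /=; apply/negP=> gC.
have hh : has (fun z : E * V => z.1 == g) C'.
  by apply/hasP; move: gC => /mapP[z zin ->]; exists z.
have [p [y [q [eC _ py]]]] := split_first hh; clear hh gC.
move: py; case: y eC => g' w' eC /= /eqP eg; subst g' C'.
move: W1; rewrite walkin_cat /= => /andP[_ /andP[/andP[_ j'] _]].
case: (joins_eq j' j) => [[zl wl]|[zl wl]]; clear j j'.
  by move: na; rewrite map_cat mem_cat /= inE wl eqxx !orbT.
rewrite map_cat last_cat /= in wl.
have hp : p = [::].
  case: p zl na {U0 sz U'} => // [[e0 x0] p'] /= zl.
  by rewrite -zl map_cat -cat_cons mem_cat mem_last.
subst p.
clear U0; move: sz U' na; case: q wl => [|[e1 x1] q] //= wl _.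
by rewrite wl mem_last.
Qed.

Lemma shorten P (a b : V) s : walkin S P a b s ->
  exists s', walkin S P a b s' && uniq (a :: map snd s').
Proof.
elim: s a => [|[e x] s IH] a /=.
  by move=> H; exists [::]; rewrite /= H.
case/andP=> /andP[Pe j] /IH[t /andP[Wt Ut]].
case ax: (a \in x :: map snd t).
  move: ax; rewrite inE => /orP[/eqP ax|]; first subst x.
    by exists t; apply/andP.
  move=> ain.
  have hh : has (fun z : E * V => z.2 == a) t.
    by apply/hasP; move: ain => /mapP[z zin ->]; exists z.
  have [p [y [q [et _ py]]]] := split_first hh.
  case: y et py => e' y et /= /eqP ya; subst y t.
  move: Wt; rewrite walkin_cat /= => /andP[_ /andP[_ Wq]].
  exists q; rewrite Wq /=.
  by move: Ut; rewrite map_cat /= => /andP[_]; rewrite cat_uniq => /and3P[_ _].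
exists ((e, x) :: t); rewrite /= Pe j Wt /= ax.
by [].
Qed.

End Walks.
Section Tree.
Variable S : gsetup.
Local Notation V := (gV S).
Local Notation E := (gE S).
Hypothesis HT : spanning_tree S.

Lemma geod_nil_r (a b : V) s : geod S a b s -> a = b -> s = [::].
Proof.
case: s => [|[e x] t] // /andP[W U] ab; subst b.
move: (walkin_last W) U => /= <- /andP[/negP[]]; exact: mem_last.
Qed.

Lemma geod_nil (a b : V) : geod S a b [::] -> a = b.
Proof. by case/andP=> /eqP. Qed.

Lemma no_cyc (a : V) C : walkin S (inT S) a a C -> C != [::] ->
  uniq (map fst C) -> uniq (map snd C) -> False.
Proof. by move=> W N U1 U2; case: HT => _; apply; exists a, C. Qed.

Lemma geod_cat (a b : V) s t : geod S a b (s ++ t) ->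
  geod S a (last a (map snd s)) s /\ geod S (last a (map snd s)) b t.
Proof.
case/andP; rewrite walkin_cat => /andP[W1 W2] U.
move: U; rewrite map_cat -cat_cons cat_uniq => /and3P[U1 H U2].
split; first by rewrite /geod W1 U1.
rewrite /geod W2 /= U2 andbT; apply/negP=> inl'.
by move/hasP: H; apply; exists (last a (map snd s)) => //; exact: mem_last.
Qed.

Lemma geod_uniq s1 s2 (a b : V) : geod S a b s1 -> geod S a b s2 -> s1 = s2.
Proof.
elim: s1 a s2 => [|[e1 x1] t1 IH] a s2.
  by move=> /geod_nil ab G2; rewrite (geod_nil_r G2 ab).
case: s2 => [|[e2 x2] t2] G1.
  by move=> /geod_nil ab; move: (geod_nil_r G1 ab).
move=> G2.
have G1' := G1; have G2' := G2.
move: G1' G2' => /andP[/= /andP[/andP[T1 J1] W1] /andP[na1 U1]]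
                /andP[/= /andP[/andP[T2 J2] W2] /andP[na2 U2]].
have gt1 : geod S x1 b t1 by apply/andP.
have gt2 : geod S x2 b t2 by apply/andP.
case: (eqVneq x1 x2) => [ex|nx].
  subst x2; case: (eqVneq e1 e2) => [ee|ne].
    by subst e2; rewrite (IH _ _ gt1 gt2).
  exfalso; apply: (@no_cyc a [:: (e1, x1); (e2, a)]) => //=.
  - by rewrite T1 J1 T2 joinsC J2 eqxx.
  - by rewrite inE ne.
  - by rewrite inE andbT; move: na1; rewrite inE negb_or eq_sym => /andP[].
exfalso.
have [s1 Es1] : exists s1, s1 = (e1, x1) :: t1 by eexists.
have [s2 Es2] : exists s2, s2 = (e2, x2) :: t2 by eexists.
rewrite -Es1 in G1; rewrite -Es2 in G2.
have bs2 : b \in map snd s2 by rewrite Es2 -(walkin_last W2) /= mem_last.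
have bs1 : b \in map snd s1 by rewrite Es1 -(walkin_last W1) /= mem_last.
have hh : has (fun z : E * V => z.2 \in map snd s2) s1.
  by case/mapP: bs1 => z zin zb; apply/hasP; exists z => //; rewrite -zb.
have [p1 [[f y] [q1 [e1s nh1 ys2]]]] := split_first hh; clear hh.
simpl in ys2.
have hh : has (fun z : E * V => z.2 == y) s2.
  by case/mapP: ys2 => z zin zb; apply/hasP; exists z => //; rewrite -zb.
have [p2 [[g y'] [q2 [e2s _ yy]]]] := split_first hh; clear hh.
move/eqP: yy => /= yy; subst y'.
have Hs1 : s1 = (p1 ++ [:: (f, y)]) ++ q1 by rewrite -catA.
have Hs2 : s2 = (p2 ++ [:: (g, y)]) ++ q2 by rewrite -catA.
have := G1; rewrite Hs1 => /geod_cat [/andP[Wa Ua] _].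
have := G2; rewrite Hs2 => /geod_cat [/andP[Wb Ub] _].
rewrite map_cat last_cat /= in Wa; rewrite map_cat /= in Ua.
rewrite map_cat last_cat /= in Wb; rewrite map_cat /= in Ub.
set C := (p1 ++ [:: (f, y)]) ++ revw a (p2 ++ [:: (g, y)]).
have WC : walkin S (inT S) a a C.
  rewrite /C walkin_cat map_cat last_cat /= Wa /=.
  exact: walkin_rev Wb.
have sndr : map snd (revw a (p2 ++ [:: (g, y)])) = rev (a :: map snd p2).
  have := snd_revw a (p2 ++ [:: (g, y)]).
  rewrite map_cat last_cat /= -cat_cons rev_cat /=.
  by case.
have UC : uniq (map snd C).
  rewrite /C !map_cat sndr /= -catA /=.
  apply: uniq_cyc; [exact: Ua | exact: Ub |].
  move=> z zin; apply/negP=> zp2.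
  move/hasP: nh1; apply; move/mapP: zin => [w win wz]; exists w => //.
  by rewrite -wz Hs2 map_cat map_cat -catA mem_cat zp2.
have np : (p1 != [::]) || (p2 != [::]).
  clear -e1s e2s nx Es1 Es2.
  case: p1 e1s => [|z1 p1] e1s //.
  case: p2 e2s => [|z2 p2] e2s //.
  by move: e1s e2s nx; rewrite Es1 Es2 => /= [[_ <- _]] [[_ <- _]]; rewrite eqxx.
have szC : 2 < size C.
  rewrite /C !size_cat size_revw size_cat /= addn1.
  clear -np; move: np; case: p1 => [|z1 p1];
    case: p2 => [|z2 p2] //= _; by rewrite ?addSn ?addnS.
apply: (@no_cyc a C WC) => //.
  by rewrite -size_eq0 -lt0n (ltn_trans _ szC).
exact: cyc_uniq WC UC szC.
Qed.

End Tree.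
Lemma cat_cmp (T : Type) (s1 r1 s2 r2 : seq T) : s1 ++ r1 = s2 ++ r2 ->
  (exists u, s1 = s2 ++ u) \/ (exists u, s2 = s1 ++ u).
Proof.
elim: s1 s2 => [|x s1 IH] [|y s2] /=.
- by left; exists [::].
- by right; exists (y :: s2).
- by left; exists (x :: s1).
- case=> -> /IH [[u ->]|[u ->]]; [left|right]; by exists u.
Qed.

Lemma catl_inj (T : Type) (p s t : seq T) : p ++ s = p ++ t -> s = t.
Proof. by elim: p => // x p IH [] /IH. Qed.

Fixpoint lexle (s t : seq nat) : bool :=
  match s, t with
  | [::], _ => true
  | _ :: _, [::] => false
  | x :: s', y :: t' => (x < y) || ((x == y) && lexle s' t')
  end.

Lemma lexle_refl s : lexle s s.
Proof. by elim: s => //= x s ->; rewrite eqxx orbT. Qed.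

Lemma lexle_trans s t u : lexle s t -> lexle t u -> lexle s u.
Proof.
elim: s t u => [|x s IH] [|y t] [|z u] //=.
case/orP=> [xy|/andP[/eqP<- st]] /orP[yz|/andP[/eqP<- tu]].
- by rewrite (ltn_trans xy yz).
- by rewrite xy.
- by rewrite yz.
- by rewrite eqxx (IH _ _ st tu) orbT.
Qed.

Lemma lexle_total s t : lexle s t || lexle t s.
Proof.
elim: s t => [|x s IH] [|y t] //=.
case: (ltngtP x y) => //= ->; by rewrite eqxx.
Qed.

Lemma lexle_anti s t : lexle s t -> lexle t s -> s = t.
Proof.
elim: s t => [|x s IH] [|y t] //=.
case/orP=> [xy|/andP[/eqP<- st]] /orP[yx|/andP[/eqP yx ts]].
- by move: (ltn_trans xy yx); rewrite ltnn.
- by move: xy; rewrite yx ltnn.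
- by move: yx; rewrite ltnn.
- by rewrite (IH _ st ts).
Qed.

Lemma lexle_cat p s t : lexle (p ++ s) (p ++ t) = lexle s t.
Proof. by elim: p => //= x p ->; rewrite ltnn eqxx. Qed.

Section Order.
Variable S : gsetup.
Local Notation V := (gV S).
Local Notation E := (gE S).
Hypothesis HT : spanning_tree S.
Hypothesis HL : labelling_ok S.
Local Notation star := (star S).

Lemma geod_ex (a b : V) : exists s, geod S a b s.
Proof.
case: HT => [Hw _]; have [s Ws] := Hw a b.
by have [s' H] := shorten Ws; exists s'.
Qed.

Definition ps (v : V) : seq (E * V) := xchoose (geod_ex star v).

Lemma ps_geod v : geod S star v (ps v).
Proof. exact: (xchooseP (geod_ex star v)). Qed.

Lemma ps_eq v s : geod S star v s -> s = ps v.
Proof. by move=> G; exact: (geod_uniq HT G (ps_geod v)). Qed.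

Lemma ps_last v : last star (map snd (ps v)) = v.
Proof. by case/andP: (ps_geod v) => /walkin_last. Qed.

Lemma ps_star : ps star = [::].
Proof. by symmetry; apply: ps_eq; rewrite /geod /= eqxx. Qed.

Definition verts (v : V) := star :: map snd (ps v).

Lemma mem_verts v : v \in verts v.
Proof. by rewrite /verts -{1}(ps_last v) mem_last. Qed.

Lemma star_verts v : star \in verts v.
Proof. by rewrite inE eqxx. Qed.

Lemma ps_inj x y : ps x = ps y -> x = y.
Proof. by move=> e; rewrite -(ps_last x) -(ps_last y) e. Qed.

Lemma anc_ps x v : x \in verts v -> exists r, ps v = ps x ++ r /\ geod S x v r.
Proof.
rewrite inE => /orP[/eqP->|xin].
  by exists (ps v); rewrite ps_star ps_geod.
have hh : has (fun z : E * V => z.2 == x) (ps v).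
  by case/mapP: xin => z zin zb; apply/hasP; exists z => //; rewrite -zb.
have [p [[f y] [q [e _ /eqP /= yx]]]] := split_first hh; subst y.
have := ps_geod v; rewrite e -cat1s catA => /geod_cat [G1 G2].
rewrite map_cat last_cat /= in G1 G2.
by exists q; rewrite -(ps_eq G1) G2.
Qed.

Lemma ps_anc x v r : ps v = ps x ++ r -> x \in verts v.
Proof.
by move=> e; rewrite /verts e map_cat -cat_cons mem_cat -{1}(ps_last x) mem_last.
Qed.

Lemma on_geodE v x : on_geod S star v x <-> x \in verts v.
Proof.
split; first by case=> s [/ps_eq -> H].
by move=> H; exists (ps v); rewrite ps_geod.
Qed.

Fixpoint labs (a : V) (s : seq (E * V)) : seq nat :=
  match s with
  | [::] => [::]
  | (e, x) :: t => lab S a e (src S e == a) :: labs x t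
  end.

Lemma labs_cat a s t : labs a (s ++ t) = labs a s ++ labs (last a (map snd s)) t.
Proof. by elim: s a => [|[e x] s IH] a //=; rewrite IH. Qed.

Lemma size_labs a s : size (labs a s) = size s.
Proof. by elim: s a => [|[e x] s IH] a //=; rewrite IH. Qed.

Definition L v := labs star (ps v).

Lemma L_cat m v r : ps v = ps m ++ r -> L v = L m ++ labs m r.
Proof. by move=> e; rewrite /L e labs_cat ps_last. Qed.

Lemma meet_ex v1 v2 : exists m, [/\ m \in verts v1, m \in verts v2 &
  forall x, x \in verts v1 -> x \in verts v2 -> x \in verts m].
Proof.
have P0 : (star \in verts v1) && (star \in verts v2) by rewrite !star_verts.
case: (@arg_maxnP _ star (fun x => (x \in verts v1) && (x \in verts v2)) (fun x => size (ps x)) P0) => m /andP[m1 m2] mx.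
exists m; split=> // x x1 x2.
have [r1 [e1 _]] := anc_ps m1; have [r1' [e1' _]] := anc_ps x1.
have := e1; rewrite e1' => /esym /cat_cmp [[u eu]|[u eu]].
  by apply: ps_anc eu.
have := mx x; rewrite x1 x2 => /(_ isT); rewrite eu size_cat.
rewrite /= -[X in _ <= X]addn0 leq_add2l leqn0 size_eq0 => /eqP u0; subst u.
by rewrite cats0 in eu; rewrite (ps_inj eu) mem_verts.
Qed.

Lemma joins_endp (e : E) m x : joins S e m x -> endp S e (src S e == m) = m.
Proof.
rewrite /endp /joins; case: (eqVneq (src S e) m) => [-> //|ne] /=.
by case/andP=> _ /eqP.
Qed.

Lemma tri v1 v2 : exists m r1 r2, [/\ is_meet S v1 v2 m, ps v1 = ps m ++ r1,
  ps v2 = ps m ++ r2, geod S m v1 r1 /\ geod S m v2 r2 &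
  (r1 = [::] \/ r2 = [::] \/ exists e1 x1 t1 e2 x2 t2,
     [/\ r1 = (e1, x1) :: t1, r2 = (e2, x2) :: t2 &
         lab S m e1 (src S e1 == m) != lab S m e2 (src S e2 == m)])].
Proof.
have [m [m1 m2 mx]] := meet_ex v1 v2.
have [r1 [e1 g1]] := anc_ps m1; have [r2 [e2 g2]] := anc_ps m2.
exists m, r1, r2; split=> //.
  split; try by apply/on_geodE.
  by move=> x /on_geodE x1 /on_geodE x2; apply/on_geodE; apply: mx.
case: r1 e1 g1 => [|[f1 x1] t1] e1 g1; first by left.
case: r2 e2 g2 => [|[f2 x2] t2] e2 g2; first by right; left.
right; right; exists f1, x1, t1, f2, x2, t2; split=> //.
have J1 : joins S f1 m x1 by case/andP: g1 => /= /andP[/andP[]].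
have J2 : joins S f2 m x2 by case/andP: g2 => /= /andP[/andP[]].
apply/negP=> /eqP el.
case: HL => _ Hinj _.
have [ef _] := Hinj m f1 _ f2 _ (joins_endp J1) (joins_endp J2) el; subst f2.
have mx1 : m != x1 by case/andP: g1 => _ /=; rewrite inE negb_or => /andP[/andP[]].
have ex : x1 = x2.
  case: (joins_eq J1 J2) => [[_ //]|[mx2 xm]].
  by rewrite xm eqxx in mx1.
subst x2.
have x1v1 : x1 \in verts v1 by rewrite /verts e1 map_cat -cat_cons mem_cat /= mem_head orbT.
have x1v2 : x1 \in verts v2 by rewrite /verts e2 map_cat -cat_cons mem_cat /= mem_head orbT.
have := ps_geod v1; rewrite e1 -cat1s catA => /geod_cat [G _].
rewrite map_cat last_cat ps_last /= in G.
have [u [eu _]] := anc_ps (mx _ x1v1 x1v2).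
move: (f_equal size eu); rewrite -(ps_eq G) !size_cat /= -addnA -{1}(addn0 (size _)).
by move/eqP; rewrite eqn_add2l.
Qed.

Lemma geod_cons_nil (a b : V) e x s : geod S a b ((e, x) :: s) -> a <> b.
Proof. by move=> G ab; move: (geod_nil_r G ab). Qed.

Lemma vle_lex v1 v2 : vle S v1 v2 <-> lexle (L v1) (L v2).
Proof.
split.
  case=> m [[/on_geodE m1 /on_geodE m2 _] H].
  have [r1 [e1 g1]] := anc_ps m1; have [r2 [e2 g2]] := anc_ps m2.
  rewrite (L_cat e1) (L_cat e2) lexle_cat.
  case: H => [mv|[nm [k1 [k2 [G1 G2 kk]]]]].
    by rewrite (geod_nil_r g1 mv).
  case: G1 kk => [[mv _]|[f [x [s [Gs ->]]]]]; first by [].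
  rewrite (geod_uniq HT g1 Gs) /=.
  case: G2 => [[mv ->]|[f' [x' [s' [Gs' ->]]]]]; first by [].
  by rewrite (geod_uniq HT g2 Gs') /= => ->.
have [m [r1 [r2 [Mm e1 e2 [g1 g2] C]]]] := tri v1 v2.
rewrite (L_cat e1) (L_cat e2) lexle_cat.
case: C => [r0|[r0|[f1 [x1 [t1 [f2 [x2 [t2 [er1 er2 nl]]]]]]]]].
- by move=> _; exists m; split=> //; left; rewrite r0 in g1; apply: geod_nil.
- rewrite r0; case: r1 e1 g1 => [|[f x] t] e1 g1 //= _.
  by exists m; split=> //; left; apply: geod_nil g1.
subst r1 r2 => /= /orP[lt|/andP[/eqP eq _]]; last by rewrite eq eqxx in nl.
exists m; split=> //; right; split; first exact: geod_cons_nil g1.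
exists (lab S m f1 (src S f1 == m)), (lab S m f2 (src S f2 == m)); split=> //.
  by right; exists f1, x1, t1.
by right; exists f2, x2, t2.
Qed.

Lemma L_inj v1 v2 : L v1 = L v2 -> v1 = v2.
Proof.
have [m [r1 [r2 [Mm e1 e2 [g1 g2] C]]]] := tri v1 v2.
rewrite (L_cat e1) (L_cat e2) => /catl_inj.
case: C => [r0|[r0|[f1 [x1 [t1 [f2 [x2 [t2 [er1 er2 nl]]]]]]]]].
- subst r1 => /esym /(f_equal size); rewrite size_labs /= => /eqP.
  by rewrite size_eq0 => /eqP r0; subst r2; rewrite -(geod_nil g1) (geod_nil g2).
- subst r2 => /(f_equal size); rewrite size_labs /= => /eqP.
  by rewrite size_eq0 => /eqP r0; subst r1; rewrite -(geod_nil g1) (geod_nil g2).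
- by subst r1 r2 => /= [[el _]]; rewrite el eqxx in nl.
Qed.

Lemma vle_refl v : vle S v v.
Proof. by apply/vle_lex; apply: lexle_refl. Qed.

Lemma vle_trans u v w : vle S u v -> vle S v w -> vle S u w.
Proof. by move=> /vle_lex H1 /vle_lex H2; apply/vle_lex; apply: lexle_trans H2. Qed.

Lemma vle_total u v : vle S u v \/ vle S v u.
Proof. by case/orP: (lexle_total (L u) (L v)) => /vle_lex; [left|right]. Qed.

Lemma vle_anti u v : vle S u v -> vle S v u -> u = v.
Proof. by move=> /vle_lex H1 /vle_lex H2; apply: L_inj; apply: lexle_anti. Qed.

End Order.
Section Child.
Variable S : gsetup.
Local Notation V := (gV S).
Local Notation E := (gE S).
Hypothesis HT : spanning_tree S.
Hypothesis HL : labelling_ok S.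
Local Notation star := (star S).
Local Notation ps := (ps HT).

Lemma revw_cat (a : V) s t :
  revw a (s ++ t) = revw (last a (map snd s)) t ++ revw a s.
Proof.
elim: s a => [|[e x] s IH] a /=; first by rewrite cats0.
by rewrite IH catA.
Qed.

Lemma par_ps v e : par_edge S v e -> exists p, ps v = ps p ++ [:: (e, v)].
Proof.
case=> x [s G]; have := geod_rev G; rewrite /= => G'.
have E1 := ps_eq HT G'.
have [G1 _] := geod_cat G'.
by exists (last star (map snd (revw x s))); rewrite -(ps_eq HT G1) E1.
Qed.

Section C.
Variables (p c : V) (e : E).
Hypothesis H : ps c = ps p ++ [:: (e, c)].

Lemma child_geod : geod S p c [:: (e, c)].
Proof.
have := ps_geod HT c; rewrite H => /geod_cat [_].
by rewrite ps_last.
Qed.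

Lemma child_joins : joins S e p c.
Proof. by case/andP: child_geod => /= /andP[/andP[]]. Qed.

Lemma child_T : e \in gT S.
Proof. by case/andP: child_geod => /= /andP[/andP[]]. Qed.

Lemma child_neq : p <> c.
Proof. by case/andP: child_geod => _ /=; rewrite inE => /andP[/eqP]. Qed.

Lemma child_nstar : c <> star.
Proof.
move=> cs; have := ps_geod HT c; case/andP=> _.
rewrite H map_cat cats1 -rcons_cons rcons_uniq => /andP[/negP[]].
by rewrite cs star_verts.
Qed.

Lemma child_vle : vle S p c.
Proof.
apply/(vle_lex HT HL); rewrite (L_cat H) -{1}(cats0 (L HT p)) lexle_cat //.
Qed.

Lemma child_vlt : vlt S p c.
Proof. by split; [exact: child_vle | exact: child_neq]. Qed.

Lemma child_par : par_edge S c e.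
Proof.
exists p, (revw star (ps p)).
have := geod_rev (ps_geod HT c); rewrite H revw_cat ps_last //.
Qed.

Lemma child_iota : iotaE S e = c /\ tauE S e = p.
Proof.
rewrite /iotaE /tauE; case: excluded_middle_informative => h;
  case/orP: child_joins => /andP[/eqP sp /eqP tc]; rewrite sp tc in h *; try by [].
- by case: child_neq; apply: (vle_anti HT HL child_vle).
- by case: h; exact: child_vle.
Qed.

End C.

Lemma par_iota v e : par_edge S v e -> iotaE S e = v.
Proof. by case/par_ps=> p H; case: (child_iota H). Qed.

Lemma tree_child e : e \in gT S -> exists p c, ps c = ps p ++ [:: (e, c)].
Proof.
move=> eT.
have ab : src S e != tgt S e.
  apply/negP=> /eqP ab; apply: (@no_cyc _ HT (src S e) [:: (e, src S e)]) => //=.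
  by rewrite /inT eT /joins ab !eqxx.
case bv: (tgt S e \in verts HT (src S e)).
  have [r [er gr]] := anc_ps bv.
  have g' : geod S (tgt S e) (src S e) [:: (e, src S e)].
    by rewrite /geod /= /inT eT /joins !eqxx orbT inE eq_sym ab.
  exists (tgt S e), (src S e); by rewrite er (geod_uniq HT gr g').
exists (src S e), (tgt S e); symmetry; apply: ps_eq.
rewrite /geod walkin_cat ps_last /= /inT eT /joins !eqxx /=.
have := ps_geod HT (src S e); case/andP=> -> U.
rewrite -[_ && _]/(uniq (star :: map snd (ps (src S e) ++ [:: (e, tgt S e)]))).
rewrite map_cat cats1 -rcons_cons rcons_uniq.
by rewrite -/(verts HT (src S e)) bv U.
Qed.

End Child.

Section Min.
Variable S : gsetup.
Hypothesis HT : spanning_tree S.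
Hypothesis HL : labelling_ok S.

Lemma vle_min_seq (I : eqType) (f : I -> gV S) (P : I -> Prop) (l : seq I) :
  (exists i, i \in l /\ P i) ->
  exists i, P i /\ forall j, j \in l -> P j -> vle S (f i) (f j).
Proof.
elim: l => [|a l IH] [i [il Pi]] //.
case: (classic (exists i, i \in l /\ P i)) => [/IH [v [Pv mv]]|nh].
  case: (classic (P a)) => Pa.
    case: (vle_total HT HL (f a) (f v)) => h.
      exists a; split=> // j; rewrite inE => /orP[/eqP->|jl] Pj.
        exact: vle_refl.
      by apply: vle_trans h (mv _ jl Pj).
    exists v; split=> // j; rewrite inE => /orP[/eqP->|jl] Pj //.
    exact: mv.
  exists v; split=> // j; rewrite inE => /orP[/eqP->|jl] Pj //.
    exact: mv.
have Pa : P a.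
  move: il; rewrite inE => /orP[/eqP<- //|il].
  by case: nh; exists i.
exists a; split=> // j; rewrite inE => /orP[/eqP->|jl] Pj.
  exact: vle_refl.
by case: nh; exists j.
Qed.

Lemma vle_min (I : finType) (f : I -> gV S) (P : I -> Prop) :
  (exists i, P i) -> exists i, P i /\ forall j, P j -> vle S (f i) (f j).
Proof.
case=> i Pi; have [v [Pv mv]] := @vle_min_seq I f P (enum I)
  (ex_intro _ i (conj (mem_enum I i) Pi)).
by exists v; split=> // j; apply: mv; rewrite mem_enum.
Qed.

End Min.
Section Main.
Variable S : gsetup.
Local Notation V := (gV S).
Local Notation E := (gE S).
Hypothesis HT : spanning_tree S.
Hypothesis HL : labelling_ok S.
Local Notation star := (star S).
Local Notation ps := (ps HT).
Implicit Types (c : {set V + E}).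

Lemma disjP (T : finType) (A B : {set T}) :
  reflect (forall x, x \in A -> x \in B -> False) [disjoint A & B].
Proof.
apply: (iffP pred0P) => H x.
  by move=> xA xB; move: (H x); rewrite /= xA xB.
by rewrite /=; apply/negP=> /andP[xA xB]; exact: H xA xB.
Qed.

Lemma cl_disjC x y : cl_disj S x y = cl_disj S y x.
Proof. exact: disjoint_sym. Qed.

Lemma cl_disjP x y : cl_disj S x y <-> forall w, w \in endset S x -> w \in endset S y -> False.
Proof. by split=> [/disjP|H]; last apply/disjP. Qed.

Lemma endset_joins (e : E) a b : joins S e a b -> endset S (inr e) = [set a; b].
Proof.
move=> j; apply/setP=> z; rewrite /= !inE.
by case/orP: j => /andP[/eqP-> /eqP->] //; rewrite orbC.
Qed.

Lemma iota_in e : iotaE S e \in endset S (inr e).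
Proof. rewrite /iotaE; destruct excluded_middle_informative; by rewrite /= !inE eqxx ?orbT. Qed.

Lemma par_uniq v e e' : par_edge S v e -> par_edge S v e' -> e = e'.
Proof.
case/(par_ps HT)=> p H; case/(par_ps HT)=> p'; rewrite H !cats1 => /rcons_inj [_ ->] //.
Qed.

Lemma par_joins v e : par_edge S v e -> exists p, [/\ joins S e p v, iotaE S e = v,
  tauE S e = p, vlt S p v & e \in gT S].
Proof.
case/(par_ps HT)=> p H; exists p.
have [i t] := child_iota HL H.
by split=> //; [exact: child_joins H | exact: (child_vlt HL H) | exact: child_T H].
Qed.

Lemma vlt_anti u v : vlt S u v -> vle S v u -> False.
Proof. by case=> uv nuv vu; apply: nuv; apply: (vle_anti HT HL uv vu). Qed.

Lemma vle_lt_total u v : vle S u v \/ vlt S v u.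
Proof.
case: (vle_total HT HL u v) => h; first by left.
case: (eqVneq v u) => [->|ne]; first by left; apply: vle_refl.
by right; split=> //; apply/eqP.
Qed.

End Main.
Section Main2.
Variable S : gsetup.
Local Notation V := (gV S).
Local Notation E := (gE S).
Hypothesis HT : spanning_tree S.
Hypothesis HL : labelling_ok S.
Local Notation star := (star S).
Local Notation ps := (ps HT).

Definition Rp (c : {set V + E}) :=
  (~ (exists e, ord_resp S c e) /\ exists v, inl v \in c /\ unblocked S c v) \/
  (exists e, min_ord_resp S c e /\
     exists v, [/\ inl v \in c, unblocked S c v & vlt S v (iotaE S e)]).

Definition Col (c : {set V + E}) :=
  exists e, min_ord_resp S c e /\
    forall v, inl v \in c -> vlt S v (iotaE S e) -> blocked S c v.

Lemma inr_inl (A B : Type) (a : A) (b : B) : @inr A B b <> inl a.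
Proof. by []. Qed.

Lemma K1 n (c0 c : {set V + E}) : is_cell S n c0 -> Rp c0 -> princ_red S c0 c -> Col c.
Proof.
move=> [_ Hc0] R [v0 [U0 Min0 [_ [e [Pe Ec]]]]].
have [p [J Ie Te Lp eT]] := par_joins HT HL Pe.
case: U0 => [v0in v0ns [e' [Pe' D0]]].
have ee := par_uniq HT Pe' Pe; subst e'.
have Ee : endset S (inr e) = [set p; v0] := endset_joins J.
have inc : forall x, (x \in c) = ((x != inl v0) && (x \in c0)) || (x == inr e).
  by move=> x; rewrite Ec !inE.
have pv0 : p != v0 by apply/eqP; case: Lp.
have pe : p \in endset S (inr e) by rewrite Ee !inE eqxx.
have v0e : v0 \in endset S (inr e) by rewrite Ee !inE eqxx orbT.
have ein : inr e \in c by rewrite inc eqxx orbT.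
exists e; split; first split.
- split=> //.
  move=> v vin vns f Pf [fne fint]; rewrite Ie.
  move: vin; rewrite inc orbF => /andP[vv0 vin0].
  have vnv0 : v <> v0 by move=> h; rewrite h eqxx in vv0.
  case: (vle_lt_total HT HL v0 v) => [h|h]; first by split=> // h'; apply: vnv0.
  exfalso; apply: (vlt_anti HT HL h); apply: Min0.
  split=> //; exists f; split=> // x xin xnv.
  have [q [Jf If Tf Lq fT]] := par_joins HT HL Pf.
  have Ef := endset_joins Jf.
  have vne : v \notin endset S (inr e).
    have := D0 _ vin0 (fun h => vnv0 (congr1 (fun y => if y is inl z then z else v) h)).
    by move/cl_disjP=> H; apply/negP=> H'; apply: (H v) => //; rewrite inE.
  have qp : q = p.
    have : tauE S e \in endset S (inr f) :&: endset S (inr e) by rewrite fint inE.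
    rewrite Te inE Ef !inE => /andP[/orP[/eqP //|/eqP pv] _].
    by move: vne; rewrite -pv pe.
  rewrite qp in Ef.
  apply/cl_disjP => w; rewrite Ef !inE => /orP[/eqP->|/eqP->] wx.
  + case: (eqVneq x (inl v0)) => [xe|xne].
      by subst x; move: wx; rewrite inE => /eqP pv; rewrite pv eqxx in pv0.
    have xne' : x <> inl v0 by move=> hh; rewrite hh eqxx in xne.
    by move: (D0 _ xin xne') => /cl_disjP /(_ p pe wx).
  + have xnv' : inl v != x by apply/eqP=> hh; apply: xnv.
    by move: (Hc0 (inl v) x vin0 xin xnv') => /cl_disjP /(_ v); rewrite inE eqxx => /(_ isT wx).
- move=> f ORf; rewrite Ie.
  case: (vle_lt_total HT HL v0 (iotaE S f)) => // h.
  have ORf0 : ord_resp S c0 f.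
    case: ORf => fin fT Hf; split=> //.
      move: fin; rewrite inc => /orP[/andP[_ //]|/eqP [fe]].
      by subst f; case: h => _; rewrite Ie.
    move=> v vin vns g Pg H.
    case: (eqVneq v v0) => [->|vne]; first exact: h.
    apply: Hf vns g Pg H.
    by rewrite inc vin andbT; apply/orP; left; apply/eqP=> [[]]; apply/eqP.
  case: R => [[nOR _]|[e0 [[ORe0 Min_e0] [v [vin Uv Lv]]]]].
    by case: nOR; exists f.
  exact: (vle_trans HT HL (Min0 _ Uv) (vle_trans HT HL (proj1 Lv) (Min_e0 _ ORf0))).
- move=> w win Lw; split=> // [[win' wns [g [Pg Dg]]]].
  rewrite Ie in Lw.
  apply: (vlt_anti HT HL Lw); apply: Min0.
  move: win; rewrite inc orbF => /andP[wv0 win0].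
  split=> //; exists g; split=> // x xin xnw.
  case: (eqVneq x (inl v0)) => [->|xv0].
    have := Dg _ ein (@inr_inl _ _ _ _).
    move/cl_disjP=> H; apply/cl_disjP=> z zg; rewrite inE => /eqP zv.
    by apply: (H z zg); rewrite zv.
  by apply: Dg => //; rewrite inc xv0 xin.
Qed.

End Main2.
Section Main3.
Variable S : gsetup.
Local Notation V := (gV S).
Local Notation E := (gE S).
Hypothesis HT : spanning_tree S.
Hypothesis HL : labelling_ok S.
Local Notation star := (star S).
Local Notation ps := (ps HT).

Lemma K2 n c : is_cell S n c -> Col c -> exists c0,
  [/\ is_cell S n c0, Rp c0, princ_red S c0 c & dim S c = (dim S c0).+1].
Proof.
move=> [Hn Hc] [e [[ORe Mine] Bl]].
case: (ORe) => ein eT Hor.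
have [p [u Hpu]] := tree_child HT eT.
have Ju := child_joins Hpu; have [Iu Tu] := child_iota HL Hpu.
have Pu := child_par Hpu; have uns := child_nstar Hpu; have Lpu := child_vlt HL Hpu.
rewrite Iu in Bl Mine.
have Ee := endset_joins Ju.
have ue : u \in endset S (inr e) by rewrite Ee !inE eqxx orbT.
have pe : p \in endset S (inr e) by rewrite Ee !inE eqxx.
have Hdisj : forall x, x \in c -> x != inr e -> cl_disj S (inr e) x.
  by move=> x xin xne; apply: Hc => //; rewrite eq_sym.
have unc : inl u \notin c.
  apply/negP=> H; move: (Hdisj _ H isT) => /cl_disjP /(_ u ue).
  by rewrite inE eqxx => /(_ isT).
set c0 := inl u |: (c :\ inr e).
have in0 : forall x, (x \in c0) = (x == inl u) || ((x != inr e) && (x \in c)).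
  by move=> x; rewrite !inE.
have Du : forall x, x \in c -> x != inr e -> cl_disj S (inl u) x.
  move=> x xin xne; move: (Hdisj _ xin xne) => /cl_disjP H.
  apply/cl_disjP=> z; rewrite inE => /eqP ->; exact: H.
have Uu : unblocked S c0 u.
  split=> //; first by rewrite in0 eqxx.
  exists e; split=> // x; rewrite in0 => /orP[/eqP -> //|/andP[xne xin]] _.
  exact: Hdisj.
have cell0 : is_cell S n c0.
  split.
    rewrite /c0 cardsU1; rewrite (cardsD1 (inr e) c) ein in Hn.
    by rewrite !inE negb_and unc orbT /= -Hn.
  move=> x y; rewrite !in0 => /orP[/eqP->|/andP[xne xin]] /orP[/eqP->|/andP[yne yin]] xy.
  - by rewrite eqxx in xy.
  - exact: Du.
  - by rewrite cl_disjC; apply: Du.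
  - exact: Hc.
have Min : forall w, unblocked S c0 w -> vle S u w.
  move=> w [win0 wns [g [Pg Dg]]].
  case: (vle_lt_total HT HL u w) => // h.
  have wu : w != u by apply/eqP; case: h.
  have win : inl w \in c.
    move: win0; rewrite in0 => /orP[/eqP [] wu'|/andP[_ //]].
    by rewrite wu' eqxx in wu.
  case: (Bl w win h) => _ [].
  split=> //; exists g; split=> // x xin xnw.
  case: (eqVneq x (inr e)) => [->|xne]; last first.
    by apply: Dg => //; rewrite in0 xne xin orbT.
  have [q [Jg Ig Tg Lq gT]] := par_joins HT HL Pg.
  have Eg := endset_joins Jg.
  have we : w \notin endset S (inr e).
    apply/negP=> H; move: (Hdisj _ win isT) => /cl_disjP /(_ w H).
    by rewrite inE eqxx => /(_ isT).
  have wp : w != p by apply/negP=> /eqP wp; rewrite wp pe in we.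
  have wu2 : w != u by [].
  have qu : q != u.
    apply/negP=> /eqP qu; rewrite qu in Eg.
    have : inl u \in c0 by rewrite in0 eqxx.
    have nul : (inl u : V + E) <> inl w by move=> [hh]; rewrite hh eqxx in wu.
    move=> /Dg /(_ nul).
    by move/cl_disjP /(_ u); rewrite Eg !inE !eqxx => /(_ isT isT).
  have qp : q != p.
    apply/negP=> /eqP qp; rewrite qp in Eg.
    have gne : g <> e by move=> ge; subst g; rewrite Eg !inE eqxx orbT in we.
    have := Hor w win wns g Pg; rewrite Iu => H.
    suff [H1 _] : vlt S u w by exact: (vlt_anti HT HL h H1).
    apply: H; split=> //; apply/setP=> z; rewrite Eg Ee Tu !inE.
    case: (eqVneq z p) => [->|zp] //=.
    case: (eqVneq z w) => [->|] //=; by rewrite (negbTE wu).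
  apply/cl_disjP=> z; rewrite Eg Ee !inE.
  case/orP=> /eqP -> /orP[] /eqP hh.
  - by rewrite hh eqxx in qp.
  - by rewrite hh eqxx in qu.
  - by rewrite hh eqxx in wp.
  - by rewrite hh eqxx in wu.
exists c0; split=> //.
- case: (classic (exists f, ord_resp S c0 f)) => [[f ORf]|nOR]; last first.
    by left; split=> //; exists u; split=> //; rewrite in0 eqxx.
  right.
  have [e0 [ORe0 Mine0]] := vle_min HT HL (iotaE S) (ex_intro _ f ORf).
  exists e0; split; first by split.
  exists u; split=> //; first by rewrite in0 eqxx.
  case: (ORe0) => e0in e0T H0.
  move: (e0in); rewrite in0 /= => /andP[e0ne e0c].
  have ORc : ord_resp S c e0.
    split=> // v vin; apply: H0; rewrite in0 vin andbT.
    by apply/orP; right.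
  split; first exact: Mine ORc.
  move=> ui.
  have := Hc _ _ ein e0c; rewrite eq_sym e0ne => /(_ isT) /cl_disjP /(_ u ue).
  by rewrite ui iota_in => /(_ isT).
- exists u; split=> //; split=> //; exists e; split=> //.
  apply/setP=> x; rewrite !inE.
  case: (eqVneq x (inr e)) => [->|xe]; first by rewrite ein orbT.
  case: (eqVneq x (inl u)) => [->|xu] /=; first by rewrite (negbTE unc).
  by rewrite orbF.
- rewrite /dim (cardsD1 (inr e)) !inE ein /= add1n; congr (_.+1); apply: eq_card => x.
  rewrite !inE; case: (eqVneq x (inr e)) => [->|xe] //=.
  by case: (eqVneq x (inl u)) => [->|xu] //=; rewrite andbF.
Qed.

End Main3.
Section Main4.
Variable S : gsetup.
Local Notation V := (gV S).
Local Notation E := (gE S).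
Hypothesis HT : spanning_tree S.
Hypothesis HL : labelling_ok S.

Lemma Rp_unbl (c : {set V + E}) : Rp c -> exists v, unblocked S c v.
Proof. by case=> [[_ [v [_ U]]]|[_ [_ [v [_ U _]]]]]; exists v. Qed.

Lemma unbl_princ (c : {set V + E}) : (exists v, unblocked S c v) ->
  exists c', princ_red S c c'.
Proof.
move=> ex; have [v [Uv Mv]] := vle_min HT HL id ex.
have Uv' := Uv; case: Uv' => _ _ [e [Pe _]].
exists ((c :\ inl v) :|: [set inr e]), v; split=> //.
by split=> //; exists e.
Qed.

Lemma princ_unbl (c c' : {set V + E}) : princ_red S c c' -> exists v, unblocked S c v.
Proof. by case=> v [U _ _]; exists v. Qed.

Lemma Rp_nCol (c : {set V + E}) : Rp c -> ~ Col c.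
Proof.
case=> [[nOR _]|[e0 [[OR0 M0] [v [vin Uv Lv]]]]] [e [[ORe Me] Bl]].
  by apply: nOR; exists e.
have ee : iotaE S e = iotaE S e0 by apply: (vle_anti HT HL (Me _ OR0) (M0 _ ORe)).
rewrite -ee in Lv.
by case: (Bl v vin Lv).
Qed.

Lemma or_Rp (c : {set V + E}) : (exists v, unblocked S c v) -> ~ Col c -> Rp c.
Proof.
move=> [v Uv] nC.
case: (classic (exists e, ord_resp S c e)) => [[f ORf]|nOR]; last first.
  by left; split=> //; exists v; split=> //; case: Uv.
right.
have [e [ORe Me]] := vle_min HT HL (iotaE S) (ex_intro _ f ORf).
exists e; split; first by split.
apply: NNPP=> H; apply: nC; exists e; split; first by split.
move=> w win Lw; split=> // Uw; apply: H; exists w; split=> //.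
Qed.

Lemma dim0_nCol (c : {set V + E}) : dim S c = 0 -> ~ Col c.
Proof.
move=> d [e [[[ein _ _] _] _]].
move/eqP: d; rewrite cards_eq0 => /eqP d.
have : inr e \in [set x in c | is_inr S x] by rewrite inE ein.
by rewrite d inE.
Qed.

Lemma domW_iff n i (c : {set V + E}) : is_cell S n c ->
  (domW S n i c <-> dim S c = i /\ Rp c).
Proof.
elim: i c => [|i IH] c cc /=.
  split.
    case=> d P _; split=> //; apply: or_Rp.
      by case: P => c' /princ_unbl.
    exact: dim0_nCol.
  by case=> d R; split=> //; apply: unbl_princ; apply: Rp_unbl.
split.
  case=> d [c' P] N; split=> //; apply: or_Rp; first exact: princ_unbl P.
  move=> C; have [c0 [cell0 R0 P0 d0]] := K2 HT HL cc C.
  apply: N; exists c0; split=> //; apply/(IH _ cell0); split=> //.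
  by move: d0; rewrite d => [[]].
case=> d R; split=> //; first exact: unbl_princ (Rp_unbl R).
case=> c0 [cell0 /(IH _ cell0) [_ R0] P0].
exact: (Rp_nCol R (K1 HT HL cell0 R0 P0)).
Qed.

Lemma redundant_iff n (c : {set V + E}) : is_cell S n c -> (redundant S n c <-> Rp c).
Proof.
move=> cc; rewrite /redundant; split; first by case/(@domW_iff n (dim S c) c cc).
by move=> R; apply/(@domW_iff n (dim S c) c cc).
Qed.

Lemma collapsible_iff n (c : {set V + E}) : is_cell S n c -> (collapsible S n c <-> Col c).
Proof.
move=> cc; split.
  case=> c0 [cell0 /(redundant_iff cell0) R0 P0].
  exact: (K1 HT HL cell0 R0 P0).
move=> C; have [c0 [cell0 R0 P0 _]] := K2 HT HL cc C.
by exists c0; split=> //; apply/(redundant_iff cell0).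
Qed.

End Main4.

Theorem mainTheorem7 (S : gsetup) (n : nat) (c : {set (gV S + gE S)}) :
  valid S -> 1 <= n -> is_cell S n c ->
  [/\ critical S n c <->
        (~ (exists e, ord_resp S c e) /\
         forall v, inl v \in c -> blocked S c v),
      redundant S n c <->
        ((~ (exists e, ord_resp S c e) /\
          exists v, inl v \in c /\ unblocked S c v) \/
         (exists e, min_ord_resp S c e /\
            exists v, [/\ inl v \in c, unblocked S c v & vlt S v (iotaE S e)]))
    & collapsible S n c <->
        (exists e, min_ord_resp S c e /\
           forall v, inl v \in c -> vlt S v (iotaE S e) -> blocked S c v)].
Proof.
case=> _ HT _ HL _ cc.
have RI := redundant_iff HT HL cc; have CI := collapsible_iff HT HL cc.
split=> //.
rewrite /critical; split.
  case=> nR nC.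
  have nOR : ~ (exists e, ord_resp S c e).
    case=> f ORf.
    have [e [ORe Me]] := vle_min HT HL (iotaE S) (ex_intro _ f ORf).
    apply: nC; apply/CI; exists e; split; first by split.
    move=> v vin Lv; split=> // Uv; apply: nR; apply/RI.
    by right; exists e; split; [split | exists v].
  split=> // v vin; split=> // Uv; apply: nR; apply/RI.
  by left; split=> //; exists v.
case=> nOR Bl; split.
  move/RI; case=> [[_ [v [vin Uv]]]|[e [[ORe _] _]]].
    by case: (Bl v vin).
  by apply: nOR; exists e.
by move/CI=> [e [[ORe _] _]]; apply: nOR; exists e.
Qed.
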